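(* Let $A_n=S_n\wr\mathrm{Aut}(\mathcal{T}_d)$, $\rho_n:A_n\to S_n$, $\sigma(f_1,\dots,f_n)\mapsto\sigma$, and $\kappa_k^n:A_n\to A_{n+d-1}$ ($1\le k\le n$) the maps defined in the context. Then each $\kappa_k^n$ is injective and the following hold for all $n$, all $g,h\in A_n$ and all $1\le k<\ell\le n$: (C1) $(gh)\kappa_k^n=(g)\kappa^n_{\rho_n(h)(k)}\,(h)\kappa_k^n$ (for all $1\le k\le n$); (C2) $((g)\kappa_\ell^n)\kappa_k^{n+d-1}=((g)\kappa_k^n)\kappa_{\ell+d-1}^{n+d-1}$; (C3) $\rho_{n+d-1}((g)\kappa_k^n)(i)=((\rho_n(g))\varsigma_k^n)(i)$ for all $i\notin\{k,k+1,\dots,k+d-1\}$. That is, $((A_n)_n,(\rho_n)_n,(\kappa_k^n)_{k\le n})$ is a $d$-ary cloning system.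
   Context: $d\ge2$, $\mathcal{T}_d$ is the rooted $d$-ary tree on words over $X=\{1,\dots,d\}$. Permutations act on the left ($\sigma\tau$ = first $\tau$, then $\sigma$). $S_n\wr G=S_n\ltimes G^n$ with elements $\sigma(g_1,\dots,g_n)$ and product $\sigma(f_1,\dots,f_n)\tau(g_1,\dots,g_n)=\sigma\tau(f_{\tau(1)}g_1,\dots,f_{\tau(n)}g_n)$. Each $f\in\mathrm{Aut}(\mathcal{T}_d)$ has a unique wreath recursion $f=\rho(f)(f^1,\dots,f^d)$ with $\rho(f)\in S_d$, $f^x\in\mathrm{Aut}(\mathcal{T}_d)$ and $f(xw)=\rho(f)(x)f^x(w)$. For $\sigma\in S_n$ and $1\le k\le n$, $(\sigma)\varsigma_k^n\in S_{n+d-1}$ is: for $i<k$, $i\mapsto\sigma(i)$ if $\sigma(i)<\sigma(k)$, $i\mapsto\sigma(i)+d-1$ if $\sigma(i)>\sigma(k)$; for $k\le i\le k+d-1$, $i\mapsto\sigma(k)+i-k$; for $i>k+d-1$, $i\mapsto\sigma(i-d+1)$ if $\sigma(i-d+1)<\sigma(k)$ and $i\mapsto\sigma(i-d+1)+d-1$ if $\sigma(i-d+1)>\sigma(k)$. For $\tau\in S_d$ let $\tau^{(k)}\in S_{n+d-1}$ send $k+j-1\mapsto k+\tau(j)-1$ ($1\le j\le d$) and fix other points. Define $(\sigma(f_1,\dots,f_n))\kappa_k^n=(\sigma)\varsigma_k^n\,\rho(f_k)^{(k)}\,(f_1,\dots,f_{k-1},f_k^1,\dots,f_k^d,f_{k+1},\dots,f_n)\in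 A_{n+d-1}$, where $f_k=\rho(f_k)(f_k^1,\dots,f_k^d)$. *)

(* Defs.v *)
From mathcomp Require Import all_boot.
Set Implicit Arguments. Unset Strict Implicit. Unset Printing Implicit Defensive.

(* Conventions: all indices are 0-based.  The alphabet X = {1..d} is 'I_d,
   positions 1..n are 'I_n (or nats < n). *)

Section Cloning.
Variable d : nat.

(* vertices of the rooted d-ary tree T_d: finite words over 'I_d *)
Definition word := seq 'I_d.
Definition tfun := word -> word.

(* Aut(T_d): bijections of the vertex set preserving length and prefixes
   (equivalently, graph automorphisms of the rooted tree). *)
Definition is_tree_aut (f : tfun) : Prop :=
  [/\ bijective f,
      forall w, size (f w) = size w &
      forall u v, take (size u) (f (u ++ v)) = f u].

(* wreath recursion f = rho(f) (f^1,...,f^d):  f (x :: w) = rho f x :: sec f x w *)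
Definition trho (f : tfun) : 'I_d -> 'I_d := fun x => head x (f [:: x]).
Definition tsec (f : tfun) (x : 'I_d) : tfun := fun w => behead (f (x :: w)).

(* raw elements sigma(f_1,...,f_n) of S_n wr Aut(T_d):
   a function on 'I_n (the permutation) and an 'I_n-indexed family of maps *)
Definition raw (n : nat) := (('I_n -> 'I_n) * ('I_n -> tfun))%type.

Definition inA n (g : raw n) : Prop :=
  bijective g.1 /\ forall i, is_tree_aut (g.2 i).

Definition rhon n (g : raw n) : 'I_n -> 'I_n := g.1.

(* product: sigma(f) tau(g) = (sigma o tau)(f_{tau 1} o g_1, ...),
   permutations and tree maps acting on the left *)
Definition mulA n (g h : raw n) : raw n :=
  (fun i => g.1 (h.1 i), fun i => fun w => g.2 (h.1 i) (h.2 i w)).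

Definition natp n (s : 'I_n -> 'I_n) (i : nat) : nat :=
  if insub i is Some j then val (s j) else i.
Definition natF n (F : 'I_n -> tfun) (i : nat) : tfun :=
  if insub i is Some j then F j else id.
Definition secn (f : tfun) (x : nat) : tfun :=
  if insub x is Some x' then tsec f x' else id.
(* turn a nat function into a function on 'I_m (identity where out of range) *)
Definition ordf m (F : nat -> nat) : 'I_m -> 'I_m := fun i => insubd i (F i).

Definition varsig_nat (s : nat -> nat) (k i : nat) : nat :=
  let sh j := if s j < s k then s j else s j + (d - 1) in
  if i < k then sh i
  else if i < k + d then s k + (i - k)
  else sh (i - (d - 1)).

Definition varsigma n (k : nat) (s : 'I_n -> 'I_n) : 'I_(n + d - 1) -> 'I_(n + d - 1) :=
  ordf (varsig_nat (natp s) k).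

Definition tauk m (t : 'I_d -> 'I_d) (k : nat) : 'I_m -> 'I_m :=
  ordf (fun i => if (k <= i) && (i < k + d) then k + natp t (i - k) else i).

Definition kappa n (k : nat) (g : raw n) : raw (n + d - 1) :=
  (fun i => varsigma k g.1 (@tauk (n + d - 1) (trho (natF g.2 k)) k i),
   fun i => let i := val i in
            if i < k then natF g.2 i
            else if i < k + d then secn (natF g.2 k) (i - k)
            else natF g.2 (i - (d - 1))).

End Cloning.

(* Main.v *)
Require Import Defs.
From mathcomp Require Import all_boot.
From mathcomp Require Import zify.
From Stdlib Require Import FunctionalExtensionality.
Set Implicit Arguments. Unset Strict Implicit.

Section S.
Variable d : nat.
Hypothesis hd : 2 <= d.

Lemma natpE n (s : 'I_n -> 'I_n) (i : 'I_n) : natp s i = s i.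
Proof. by rewrite /natp valK. Qed.
Lemma natpE' n (s : 'I_n -> 'I_n) i (hi : i < n) : natp s i = s (Ordinal hi).
Proof. by rewrite -(natpE s (Ordinal hi)). Qed.
Lemma natp_lt n (s : 'I_n -> 'I_n) i : i < n -> natp s i < n.
Proof. by move=> hi; rewrite (natpE' s hi). Qed.
Lemma natFE n (F : 'I_n -> tfun d) (i : 'I_n) : natF F i = F i.
Proof. by rewrite /natF valK. Qed.
Lemma natFE' n (F : 'I_n -> tfun d) i (hi : i < n) : natF F i = F (Ordinal hi).
Proof. by rewrite -(natFE F (Ordinal hi)). Qed.
Lemma ordfE m (F : nat -> nat) (i : 'I_m) : F i < m -> val (ordf F i) = F i.
Proof. by move=> h; rewrite /ordf val_insubd h. Qed.
Lemma secnE (f : tfun d) (x : 'I_d) : secn f x = tsec f x.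
Proof. by rewrite /secn valK. Qed.

Section Tree.
Variable f : tfun d.
Hypothesis hf : is_tree_aut f.

Lemma ta_nil : f [::] = [::].
Proof. case: hf => _ hs _; by apply/size0nil; rewrite hs. Qed.
Lemma ta_cons x w : f (x :: w) = trho f x :: tsec f x w.
Proof.
case: hf => _ hs hp.
have h1 := hp [:: x] w. have h2 := hs [:: x]. have h3 := hs (x :: w).
rewrite /trho /tsec. move: h1 h2 h3 => /=.
case: (f [:: x]) => [|y [|z r]] //= h1 _ _; move: h1.
by case: (f (x :: w)) => [|y' r'] //= [->].
Qed.
Lemma ta_single x : f [:: x] = [:: trho f x].
Proof. case: hf => _ hs _; rewrite /trho; have := hs [:: x]; by case: (f [:: x]) => [|y [|]]. Qed.
Lemma trho_inj : injective (trho f).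
Proof.
move=> x y h. case: hf => [[g gK _]] _ _.
have : f [:: x] = f [:: y] by rewrite !ta_single h.
by move/(can_inj gK) => [].
Qed.
Lemma trho_bij : bijective (trho f).
Proof. exact: injF_bij trho_inj. Qed.
Lemma tsec_aut x : is_tree_aut (tsec f x).
Proof.
case: hf => [[g gK Kg]] hs hp; split.
- exists (fun v => behead (g (trho f x :: v))).
    by move=> w; rewrite /tsec ta_cons /= -ta_cons gK.
  move=> v. case E: (g (trho f x :: v)) => [|x' w'].
    by move: (Kg (trho f x :: v)); rewrite E ta_nil.
  have := Kg (trho f x :: v); rewrite E ta_cons => -[h1 h2].
  by move/trho_inj: h1 => <-.
- by move=> w; rewrite /tsec size_behead hs.
- move=> u v; rewrite /tsec. have := hp (x :: u) v.
  by rewrite !ta_cons /= => -[].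
Qed.
End Tree.

Lemma id_aut : is_tree_aut (@id (word d)).
Proof. split=> //; [exact: (Bijective (g:=id))|by move=> u v; rewrite take_size_cat]. Qed.
Lemma natF_aut n (F : 'I_n -> tfun d) i : (forall j, is_tree_aut (F j)) -> is_tree_aut (natF F i).
Proof. by rewrite /natF; case: insubP => // *; apply: id_aut. Qed.
Lemma secn_aut (f : tfun d) x : is_tree_aut f -> is_tree_aut (secn f x).
Proof. by rewrite /secn; case: insubP => [? _ _ h|_ _]; [apply: tsec_aut|apply: id_aut]. Qed.

Lemma trho_comp (f g : tfun d) : is_tree_aut f -> is_tree_aut g -> forall x,
  trho (fun w => f (g w)) x = trho f (trho g x).
Proof. by move=> hf hg x; rewrite /trho ta_single // ta_single. Qed.
Lemma tsec_comp (f g : tfun d) : is_tree_aut f -> is_tree_aut g -> forall x,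
  tsec (fun w => f (g w)) x = fun w => tsec f (trho g x) (tsec g x w).
Proof. by move=> hf hg x; apply: functional_extensionality => w; rewrite /tsec ta_cons // ta_cons. Qed.
End S.

Definition Tn d (t : nat -> nat) k x := if (k <= x) && (x < k + d) then k + t (x - k) else x.

Lemma ifT' (A : Type) (b : bool) (x y : A) : b -> (if b then x else y) = x.
Proof. by move=> ->. Qed.
Lemma ifF' (A : Type) (b : bool) (x y : A) : ~~ b -> (if b then x else y) = y.
Proof. by move/negbTE=> ->. Qed.

Definition RNG (f : nat -> nat) (n : nat) := forall a, a < n -> f a < n.
Definition INJ (f : nat -> nat) (n : nat) := forall a b, a < n -> b < n -> f a = f b -> a = b.

Ltac purearg a :=
  lazymatch a with
  | context[if _ then _ else _] => fail
  | context[varsig_nat _ _ _ _] => fail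
  | context[Tn _ _ _ _] => fail
  | _ => idtac end.

Ltac clear_fun := repeat match goal with
  | H : context[?f ?x] |- _ => is_var f;
      lazymatch type of f with nat -> nat =>
      lazymatch type of H with is_true (_ < _) => fail | _ => clear H end end
  | H : RNG _ _ |- _ => clear H
  | H : INJ _ _ |- _ => clear H
  end.

Ltac rw_all E f a :=
  rewrite ?E;
  repeat match goal with
  | H : context[f a] |- _ =>
      lazymatch type of H with f a = _ => fail | _ => rewrite E in H end
  end.

Inductive mark (a b : nat) : Prop := Mark.
Ltac norm2 f a b :=
  assert_fails (constr_eq a b); purearg a; purearg b;
  assert_fails (assert (mark a b) by assumption);
  let E := fresh "E" in
  first [assert (E : f a = f b) by (f_equal; clear_fun; lia); rw_all E f a; clear E
        | pose proof (Mark a b)].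
Ltac norm2_old f a b :=
  let E := fresh "E" in
  assert (E : f a = f b) by (f_equal; clear_fun; lia);
  rw_all E f a; clear E.

Ltac normf f :=
  repeat match goal with
  | |- context[f ?a] => match goal with
     | |- context[f ?b] => norm2 f a b
     | H : context[f ?b] |- _ => norm2 f a b end
  | H0 : context[f ?a] |- _ => match goal with
     | |- context[f ?b] => norm2 f a b
     | H : context[f ?b] |- _ => norm2 f a b end
  end.

Inductive mark1 (a : nat) : Prop := Mark1.
Inductive mark2 (a b : nat) : Prop := Mark2.
Ltac sat1 pr f n a := purearg a;
  assert_fails (assert (f a < n) by assumption);
  assert_fails (assert (mark1 a) by assumption);
  first [have ? : f a < n by apply: (pr a); clear_fun; lia | pose proof (Mark1 a)].
Ltac satf pr f n :=
  repeat match goal with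
  | |- context[f ?a] => sat1 pr f n a
  | H : context[f ?a] |- _ => sat1 pr f n a
  end.
Ltac sat2 pi f n a b :=
  assert_fails (constr_eq a b); purearg a; purearg b;
  assert_fails (assert (f a <> f b) by assumption);
  assert_fails (assert (f b <> f a) by assumption);
  assert_fails (assert (mark2 a b) by assumption);
  assert_fails (assert (f a = f b -> a = b) by assumption);
  assert_fails (assert (f b = f a -> b = a) by assumption);
  first [assert (f a <> f b) by (let E := fresh in intro E; apply (pi a b) in E; clear_fun; lia)
        | assert (f a = f b -> a = b) by (apply (pi a b); clear_fun; lia)
        | pose proof (Mark2 a b)].
Ltac sati pi f n :=
  repeat match goal with
  | |- context[f ?a] => match goal with
     | |- context[f ?b] => sat2 pi f n a b
     | H : context[f ?b] |- _ => sat2 pi f n a b end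
  | H0 : context[f ?a] |- _ => match goal with
     | |- context[f ?b] => sat2 pi f n a b
     | H : context[f ?b] |- _ => sat2 pi f n a b end
  end.

Ltac clear_marks := repeat match goal with H : mark _ _ |- _ => clear H | H : mark1 _ |- _ => clear H | H : mark2 _ _ |- _ => clear H end.
Ltac NRM := repeat match goal with
  | H : RNG ?f _ |- _ => progress (normf f) end; clear_marks.
Ltac SAT := repeat match goal with
  | H : RNG ?f ?n |- _ => progress (satf H f n)
  | H : INJ ?f ?n |- _ => progress (sati H f n)
  end; clear_marks.
Ltac LIA := lia.
Ltac stepif :=
  match goal with
  | |- context[if ?b then _ else _] => purearg b;
    first [rewrite (@ifT' _ b); [|LIA] | rewrite (@ifF' _ b); [|LIA]]
  end.

Ltac splitif :=
  match goal with
  | |- context[if ?b then _ else _] =>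
    purearg b; case: (boolP b) => ?; cbv iota beta
  end.


Section N.
Variable d : nat.
Lemma T_in t k x : k <= x -> x < k + d -> Tn d t k x = k + t (x - k).
Proof. by move=> h1 h2; rewrite /Tn h1 h2. Qed.
Lemma T_out t k x : ~~ ((k <= x) && (x < k + d)) -> Tn d t k x = x.
Proof. by move=> h; rewrite /Tn (negbTE h). Qed.
Lemma V_lt q k x : x < k -> varsig_nat d q k x = if q x < q k then q x else q x + (d - 1).
Proof. by move=> h; rewrite /varsig_nat h. Qed.
Lemma V_bk q k x : k <= x -> x < k + d -> varsig_nat d q k x = q k + (x - k).
Proof. by move=> h1 h2; rewrite /varsig_nat h2 ltnNge h1. Qed.
Lemma V_gt q k x : k + d <= x -> varsig_nat d q k x =
  if q (x - (d - 1)) < q k then q (x - (d - 1)) else q (x - (d - 1)) + (d - 1).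
Proof. move=> h; rewrite /varsig_nat (_ : (x < k) = false); last lia.
  by rewrite (_ : (x < k + d) = false); last lia. Qed.
End N.

Ltac stepTV d :=
  match goal with
  | |- context[Tn d ?t ?k ?x] => purearg x;
    first [rewrite (@T_in d t k x); [|LIA|LIA] | rewrite (@T_out d t k x); [|LIA]]
  | |- context[varsig_nat d ?q ?k ?x] => purearg x;
    first [rewrite (@V_lt d q k x); [|LIA] | rewrite (@V_bk d q k x); [|LIA|LIA]
          | rewrite (@V_gt d q k x); [|LIA]]
  end; cbv beta.

Ltac SATR := repeat match goal with
  | H : RNG ?f ?n |- _ => progress (satf H f n) end.
Ltac crunch d := repeat (SATR; first [stepTV d | splitif]); try lia; NRM; try lia; SAT; lia.
Ltac crunchS d := repeat (SATR; first [stepTV d | splitif | progress SAT]); try lia; NRM; try lia; SAT; lia.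

Section N2.
Variable d : nat.
Hypothesis hd : 2 <= d.
Lemma C2nat (p tk tl : nat -> nat) n k l i
  (pr : RNG p n) (pi : INJ p n) (tkr : RNG tk d) (tlr : RNG tl d) :
  k < l -> l < n -> i < n + d - 1 + d - 1 ->
  varsig_nat d (fun y => varsig_nat d p l (Tn d tl l y)) k (Tn d tk k i) =
  varsig_nat d (fun y => varsig_nat d p k (Tn d tk k y)) (l + d - 1) (Tn d tl (l + d - 1) i).
Proof.
move=> kl ln iM.
case: (ltnP i k) => h1; [|case: (ltnP i (k + d)) => h2; [|case: (ltnP i (l + d - 1)) => h3;
  [|case: (ltnP i (l + d - 1 + d)) => h4]]].
all: crunch d.
Qed.

Lemma Vrange (p : nat -> nat) n k x (pr : RNG p n) :
  k < n -> x < n + d - 1 -> varsig_nat d p k x < n + d - 1.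
Proof.
move=> kn xm. case: (ltnP x k) => h1; [|case: (ltnP x (k + d)) => h2].
all: crunch d.
Qed.
Lemma Trange (t : nat -> nat) n k x (tr : RNG t d) :
  k < n -> x < n + d - 1 -> Tn d t k x < n + d - 1.
Proof.
move=> kn xm. case: (ltnP x k) => h1; [|case: (ltnP x (k + d)) => h2].
all: crunch d.
Qed.
Lemma Vinj (p : nat -> nat) n k x y (pr : RNG p n) (pi : INJ p n) :
  k < n -> x < n + d - 1 -> y < n + d - 1 -> varsig_nat d p k x = varsig_nat d p k y -> x = y.
Proof.
move=> kn xm ym. case: (ltnP x k) => h1; [|case: (ltnP x (k + d)) => h2];
  (case: (ltnP y k) => h3; [|case: (ltnP y (k + d)) => h4]).
all: crunch d.
Qed.
Lemma Tinj (t : nat -> nat) n k x y (tr : RNG t d) (ti : INJ t d) :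
  k < n -> x < n + d - 1 -> y < n + d - 1 -> Tn d t k x = Tn d t k y -> x = y.
Proof.
move=> kn xm ym. case: (ltnP x k) => h1; [|case: (ltnP x (k + d)) => h2];
  (case: (ltnP y k) => h3; [|case: (ltnP y (k + d)) => h4]).
all: crunch d.
Qed.
Lemma C1nat (p1 p2 t1 t2 : nat -> nat) n k i
  (p1r : RNG p1 n) (p1i : INJ p1 n) (p2r : RNG p2 n) (p2i : INJ p2 n)
  (t1r : RNG t1 d) (t2r : RNG t2 d) :
  k < n -> i < n + d - 1 ->
  varsig_nat d (fun y => p1 (p2 y)) k (Tn d (fun j => t1 (t2 j)) k i) =
  varsig_nat d p1 (p2 k) (Tn d t1 (p2 k) (varsig_nat d p2 k (Tn d t2 k i))).
Proof.
move=> kn im. case: (ltnP i k) => h1; [|case: (ltnP i (k + d)) => h2].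
all: crunchS d.
Qed.
End N2.


Lemma pairE (A B : Type) (x y : A * B) : x.1 = y.1 -> x.2 = y.2 -> x = y.
Proof. by case: x; case: y => /= ? ? ? ? -> ->. Qed.

Section G.
Variable d : nat.
Hypothesis hd : 2 <= d.

Definition TR n (g : raw d n) k := natp (trho (natF g.2 k)).

Lemma natp_RNG m (s : 'I_m -> 'I_m) : RNG (natp s) m.
Proof. by move=> a; apply: natp_lt. Qed.
Lemma natp_INJ m (s : 'I_m -> 'I_m) : injective s -> INJ (natp s) m.
Proof.
move=> si a b ha hb; rewrite (natpE' s ha) (natpE' s hb) => /val_inj/si.
by move=> [].
Qed.
Lemma TR_RNG n (g : raw d n) k : RNG (TR g k) d.
Proof. exact: natp_RNG. Qed.
Lemma TR_INJ n (g : raw d n) k : inA g -> INJ (TR g k) d.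
Proof. by case=> _ h; apply/natp_INJ/trho_inj/natF_aut. Qed.
Lemma P_INJ n (g : raw d n) : inA g -> INJ (natp g.1) n.
Proof. by case=> [[f fK _]] _; apply/natp_INJ/(can_inj fK). Qed.

Lemma kappa1E n (g : raw d n) k (i : 'I_(n + d - 1)) : k < n ->
  val ((kappa k g).1 i) = varsig_nat d (natp g.1) k (Tn d (TR g k) k i).
Proof.
move=> kn. rewrite /kappa /varsigma ordfE.
  by rewrite /tauk ordfE //; apply: (Trange hd (TR_RNG g k)) => //.
by apply: (Vrange hd) => //; apply: natp_RNG.
Qed.
Lemma kappa2E n (g : raw d n) k (i : 'I_(n + d - 1)) :
  (kappa k g).2 i = if val i < k then natF g.2 i else if val i < k + d
     then secn (natF g.2 k) (val i - k) else natF g.2 (val i - (d - 1)).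
Proof. by []. Qed.
Lemma natp_kappa n (g : raw d n) k y : k < n -> y < n + d - 1 ->
  natp (kappa k g).1 y = varsig_nat d (natp g.1) k (Tn d (TR g k) k y).
Proof. by move=> kn hy; rewrite (natpE' _ hy) kappa1E. Qed.
Lemma natF_kappa n (g : raw d n) k y : y < n + d - 1 ->
  natF (kappa k g).2 y = if y < k then natF g.2 y else if y < k + d
     then secn (natF g.2 k) (y - k) else natF g.2 (y - (d - 1)).
Proof. by move=> hy; rewrite (natFE' _ hy). Qed.

Lemma V_ext (q q' : nat -> nat) n k x : (forall y, y < n -> q y = q' y) ->
  k < n -> x < n + d - 1 -> varsig_nat d q k x = varsig_nat d q' k x.
Proof.
move=> E kn xm. rewrite /varsig_nat (E k kn).
case: ifP => h1; [|case: ifP => h2] => //; rewrite E //; lia.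
Qed.
Lemma T_ext (t t' : nat -> nat) k x : (forall j, j < d -> t j = t' j) ->
  Tn d t k x = Tn d t' k x.
Proof. by move=> E; rewrite /Tn; case: ifP => // /andP [h1 h2]; rewrite E //; lia. Qed.

Lemma inA_kappa n k (g : raw d n) : k < n -> inA g -> inA (kappa k g).
Proof.
move=> kn hg; split.
- apply: injF_bij => i j /(congr1 val). rewrite !kappa1E // => E.
  apply: val_inj.
  have := Vinj hd (natp_RNG g.1) (P_INJ hg) kn _ _ E.
  have := Trange hd (TR_RNG g k) kn. move=> TRr.
  move/(_ (TRr _ (ltn_ord i)) (TRr _ (ltn_ord j))).
  move=> E'. have := Tinj hd (TR_RNG g k) (TR_INJ (k:=k) hg) kn (ltn_ord i) (ltn_ord j) E'. by [].
- move=> i. rewrite kappa2E. case: hg => _ hg.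
  case: ifP => _; [|case: ifP => _].
  + exact: natF_aut.
  + exact/secn_aut/natF_aut.
  + exact: natF_aut.
Qed.

Lemma C3 n k (g : raw d n) : k < n -> forall i : 'I_(n + d - 1),
  ~~ ((k <= i) && (i < k + d)) -> rhon (kappa k g) i = varsigma k (rhon g) i.
Proof.
move=> kn i hi. rewrite /rhon /kappa /=. congr (varsigma _ _ _).
apply: val_inj. by rewrite /tauk ordfE /= (negbTE hi).
Qed.

Lemma KP_blk (p t : nat -> nat) k j : RNG t d -> j < d ->
  varsig_nat d p k (Tn d t k (k + j)) = p k + t j.
Proof.
move=> tr hj. rewrite T_in; [|lia|lia]. rewrite addKn. have := tr _ hj => htj.
rewrite V_bk; [|lia|lia]. by rewrite !addKn.
Qed.
Lemma KP_out (p t : nat -> nat) k a : a != k ->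
  varsig_nat d p k (Tn d t k (if a < k then a else a + (d - 1))) =
  if p a < p k then p a else p a + (d - 1).
Proof.
move=> hak. case: ifP => h.
  by rewrite T_out; [|lia]; rewrite V_lt.
rewrite T_out; [|lia]. rewrite V_gt; [|lia]. by rewrite addnK.
Qed.

Lemma kappa_inj n k (g g' : raw d n) : k < n -> inA g -> inA g' ->
  kappa k g = kappa k g' -> g = g'.
Proof.
move=> kn hg hg' H.
have H1 : forall i, val ((kappa k g).1 i) = val ((kappa k g').1 i) by rewrite H.
have H2 : forall i, (kappa k g).2 i = (kappa k g').2 i by rewrite H.
have Ey : forall y, y < n + d - 1 -> varsig_nat d (natp g.1) k (Tn d (TR g k) k y) =
   varsig_nat d (natp g'.1) k (Tn d (TR g' k) k y).
  by move=> y hy; have := H1 (Ordinal hy); rewrite !kappa1E.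
have Eb : forall j, j < d -> natp g.1 k + TR g k j = natp g'.1 k + TR g' k j.
  by move=> j hj; rewrite -!KP_blk // ?Ey //; try lia; apply: TR_RNG.
have surj : forall (g0 : raw d n), inA g0 -> exists2 j, j < d & TR g0 k j = 0.
  move=> g0 [_ h0]. have [ginv _ K2] := trho_bij (natF_aut k h0).
  have d0 : 0 < d by lia.
  exists (val (ginv (Ordinal d0))); first exact: ltn_ord.
  by rewrite /TR natpE K2.
have pk : natp g.1 k = natp g'.1 k.
  have [j1 hj1 e1] := surj g hg. have [j2 hj2 e2] := surj g' hg'.
  have := Eb j1 hj1; have := Eb j2 hj2; lia.
have trE : forall j, j < d -> TR g k j = TR g' k j.
  by move=> j hj; have := Eb j hj; lia.
have pE : forall a, a < n -> natp g.1 a = natp g'.1 a.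
  move=> a ha. case: (eqVneq a k) => [->//|hak].
  have hpos : (if a < k then a else a + (d - 1)) < n + d - 1 by case: ifP => _; lia.
  have := Ey _ hpos. rewrite !KP_out //.
  have := P_INJ hg ha kn; have := P_INJ hg' ha kn.
  have := natp_RNG g.1 ha; have := natp_RNG g'.1 ha.
  have := natp_RNG g.1 kn; have := natp_RNG g'.1 kn.
  move: hak => /eqP hak.
  case: ifP; case: ifP; lia.
have F1 : g.1 = g'.1.
  apply: functional_extensionality => a; apply: val_inj.
  by have := pE a (ltn_ord a); rewrite !natpE.
have FE : forall a, a < n -> natF g.2 a = natF g'.2 a.
  move=> a ha. case: (eqVneq a k) => [->|hak].
  - have Es : forall j, j < d -> secn (natF g.2 k) j = secn (natF g'.2 k) j.
      move=> j hj. have hkj : k + j < n + d - 1 by lia.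
      have := H2 (Ordinal hkj). rewrite !kappa2E /=.
      rewrite (_ : (k + j < k) = false); last lia.
      by rewrite (_ : (k + j < k + d) = true) ?addKn; last lia.
    case: hg => _ hg; case: hg' => _ hg'.
    rewrite !(natFE' _ kn) in trE Es *.
    set f := g.2 _ in trE Es *; set f' := g'.2 _ in trE Es *.
    have hf : is_tree_aut f by apply: hg. have hf' : is_tree_aut f' by apply: hg'.
    apply: functional_extensionality => w; case: w => [|x w].
      by rewrite !ta_nil.
    rewrite !ta_cons //.
    have e1 : trho f x = trho f' x.
      by apply: val_inj; have := trE _ (ltn_ord x); rewrite /TR !natFE' // !natpE.
    by rewrite e1 -!secnE Es.
  - move/eqP: hak => hak. case: (ltnP a k) => hlt.
    + have hp : a < n + d - 1 by lia.
      by have := H2 (Ordinal hp); rewrite !kappa2E /= hlt.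
    + have hp : a + (d - 1) < n + d - 1 by lia.
      have := H2 (Ordinal hp); rewrite !kappa2E /=.
      rewrite (_ : (a + (d - 1) < k) = false); last lia.
      rewrite (_ : (a + (d - 1) < k + d) = false); last lia.
      by rewrite addnK.
apply: pairE => //.
apply: functional_extensionality => a.
by have := FE a (ltn_ord a); rewrite !natFE.
Qed.

Lemma mulA1 n (g h : raw d n) i : (mulA g h).1 i = g.1 (h.1 i). Proof. by []. Qed.
Lemma mulA2 n (g h : raw d n) i w : (mulA g h).2 i w = g.2 (h.1 i) (h.2 i w). Proof. by []. Qed.
Lemma natp_mul n (g h : raw d n) y : y < n ->
  natp (mulA g h).1 y = natp g.1 (natp h.1 y).
Proof. by move=> hy; rewrite !(natpE' _ hy) natpE. Qed.
Lemma natF_mul n (g h : raw d n) y : y < n ->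
  natF (mulA g h).2 y = fun w => natF g.2 (natp h.1 y) (natF h.2 y w).
Proof. by move=> hy; rewrite (natFE' _ hy) (natpE' _ hy) (natFE' _ hy) natFE. Qed.
Lemma TR_mul n (g h : raw d n) k j : inA g -> inA h -> k < n -> j < d ->
  TR (mulA g h) k j = TR g (natp h.1 k) (TR h k j).
Proof.
move=> [_ hg] [_ hh] kn hj. rewrite /TR natF_mul // !(natpE' _ hj) trho_comp ?natpE //;
  exact: natF_aut.
Qed.
Lemma secn_comp (f g : tfun d) x : is_tree_aut f -> is_tree_aut g -> x < d ->
  secn (fun w => f (g w)) x = fun w => secn f (natp (trho g) x) (secn g x w).
Proof.
move=> hf hg hx. rewrite (natpE' _ hx).
have := @secnE d (fun w => f (g w)) (Ordinal hx). rewrite /= => ->.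
rewrite tsec_comp //. apply: functional_extensionality => w.
by rewrite secnE -(secnE g (Ordinal hx)).
Qed.

Lemma C1 n k (g h : raw d n) : k < n -> inA g -> inA h ->
  kappa k (mulA g h) = mulA (kappa (natp (rhon h) k) g) (kappa k h).
Proof.
move=> kn hg hh. rewrite /rhon. set hk := natp h.1 k.
have hkn : hk < n by apply: natp_lt.
apply: pairE.
- apply: functional_extensionality => i; apply: val_inj.
  rewrite mulA1 (kappa1E _ _ hkn) !kappa1E //.
  rewrite (@T_ext _ (fun j => TR g hk (TR h k j))); last by move=> j hj; rewrite TR_mul.
  rewrite (@V_ext _ (fun y => natp g.1 (natp h.1 y)) n);
    [|by move=> y hy; rewrite natp_mul|by []|].
    exact: (C1nat hd (natp_RNG g.1) (P_INJ hg) (natp_RNG h.1) (P_INJ hh) (TR_RNG g hk) (TR_RNG h k) kn (ltn_ord i)).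
  apply: (Trange hd _ kn (ltn_ord i)). by move=> j hj; apply: (TR_RNG g hk); apply: (TR_RNG h k).
- apply: functional_extensionality => i; apply: functional_extensionality => w.
  have Ev : nat_of_ord ((kappa k h).1 i) = varsig_nat d (natp h.1) k (Tn d (TR h k) k i)
    := kappa1E h i kn.
  rewrite mulA2 !kappa2E kappa1E // Ev.
  have hi := ltn_ord i. change (\val i) with (nat_of_ord i).
  have pr := natp_RNG h.1; have pinj := P_INJ hh.
  have tr := TR_RNG h k.
  case: (ltnP i k) => h1.
  + rewrite T_out; [|lia]. rewrite V_lt //. rewrite natF_mul; [|lia].
    have := pr _ kn; have := pr i (ltn_trans h1 kn).
    have : natp h.1 i <> natp h.1 k by move/pinj => /(_ (ltn_trans h1 kn) kn); lia.
    rewrite -/hk => ? ? ?.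
    case: (ltnP (natp h.1 i) hk) => c; repeat stepif; rewrite ?addnK //.
  case: (ltnP i (k + d)) => h2.
  + rewrite T_in; [|lia|lia]. rewrite V_bk; [|lia|]; last first.
      have := tr (i - k); lia.
    rewrite !addKn. have := tr (i - k) ltac:(lia). rewrite -/hk => ?.
    repeat stepif. rewrite natF_mul // secn_comp //; [by case: hg => _ hg; apply: natF_aut
      |by case: hh => _ hh; apply: natF_aut|lia].
  + rewrite T_out; [|lia]. rewrite V_gt //. rewrite natF_mul; [|lia].
    have := pr _ kn; have := pr (i - (d - 1)) ltac:(lia).
    have : natp h.1 (i - (d - 1)) <> natp h.1 k by move/pinj => /(_ ltac:(lia) kn); lia.
    rewrite -/hk => ? ? ?.
    case: (ltnP (natp h.1 (i - (d - 1))) hk) => c; repeat stepif; rewrite ?addnK //.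
Qed.

Lemma C2 n k l (g : raw d n) : k < l -> l < n -> inA g ->
  kappa k (kappa l g) = kappa (l + d - 1) (kappa k g).
Proof.
move=> kl ln hg.
have kn : k < n by lia.
have km : k < n + d - 1 by lia.
have lm : l + d - 1 < n + d - 1 by lia.
have TR1 : TR (kappa l g) k = TR g k.
  by rewrite /TR natF_kappa; [rewrite kl|lia].
have TR2 : TR (kappa k g) (l + d - 1) = TR g l.
  rewrite /TR natF_kappa //.
  rewrite (_ : (l + d - 1 < k) = false); last lia.
  rewrite (_ : (l + d - 1 < k + d) = false); last lia.
  by rewrite (_ : l + d - 1 - (d - 1) = l); last lia.
apply: pairE.
- apply: functional_extensionality => i; apply: val_inj.
  rewrite !kappa1E // TR1 TR2.
  have iM := ltn_ord i.
  rewrite (@V_ext _ (fun y => varsig_nat d (natp g.1) l (Tn d (TR g l) l y)) (n + d - 1));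
    [|by move=> y hy; rewrite natp_kappa|by []|].
    rewrite (@V_ext (natp (kappa k g).1) (fun y => varsig_nat d (natp g.1) k (Tn d (TR g k) k y)) (n + d - 1));
    [|by move=> y hy; rewrite natp_kappa|by []|].
      exact: (C2nat hd (natp_RNG g.1) (P_INJ hg) (TR_RNG g k) (TR_RNG g l) kl ln iM).
    exact: (Trange hd (TR_RNG _ _) lm iM).
  exact: (Trange hd (TR_RNG _ _) km iM).
- apply: functional_extensionality => i.
  rewrite !kappa2E. have iM := ltn_ord i. change (\val i) with (nat_of_ord i).
  case: (ltnP i k) => h1; [|case: (ltnP i (k + d)) => h2; [|case: (ltnP i (l + d - 1)) => h3;
    [|case: (ltnP i (l + d - 1 + d)) => h4]]];
  repeat stepif; repeat (rewrite natF_kappa; last lia); repeat stepif;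
  first [reflexivity | (congr (natF _ _); lia) | (congr (secn (natF _ _) _); lia)].
Qed.
End G.

Theorem mainTheorem3 (d : nat) (hd : 2 <= d) :
  (forall (n k : nat), k < n -> forall g : raw d n, inA g -> inA (kappa k g)) /\
  (forall (n k : nat), k < n -> forall g g' : raw d n,
      inA g -> inA g' -> kappa k g = kappa k g' -> g = g') /\
  (forall (n k : nat), k < n -> forall g h : raw d n, inA g -> inA h ->
      kappa k (mulA g h) = mulA (kappa (natp (rhon h) k) g) (kappa k h)) /\
  (forall (n k l : nat), k < l -> l < n -> forall g : raw d n, inA g ->
      kappa k (kappa l g) = kappa (l + d - 1) (kappa k g)) /\
  (forall (n k : nat), k < n -> forall g : raw d n, inA g ->
      forall i : 'I_(n + d - 1), ~~ ((k <= i) && (i < k + d)) ->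
        rhon (kappa k g) i = varsigma k (rhon g) i).
Proof.
split; [|split; [|split; [|split]]].
- by move=> n k kn g hg; apply: inA_kappa.
- by move=> n k kn g g' hg hg'; apply: kappa_inj.
- by move=> n k kn g h hg hh; apply: C1.
- by move=> n k l kl ln g hg; apply: C2.
- by move=> n k kn g hg i hi; apply: C3.
Qed.
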